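(* Let $K\in\mathbb{R}^{m\times n}$ and let $Q=\begin{bmatrix}Q_{11}&Q_{12}\\Q_{12}^\top&Q_{22}\end{bmatrix}\in\mathbb{R}^{(n+m)\times(n+m)}$ be symmetric with $Q_{11}\in\mathbb{R}^{n\times n}$. Define $$Y(x)=\begin{bmatrix}x\\ \mathrm{dz}(Kx)\end{bmatrix}^\top Q\begin{bmatrix}x\\ \mathrm{dz}(Kx)\end{bmatrix},\qquad x\in\mathbb{R}^n,$$ and, for a diagonal $T_0\in\mathbb{R}^{m\times m}$ and a symmetric $R\in\mathbb{R}^{m\times m}$, $$\Sigma_0=\begin{bmatrix}0&K^\top T_0\\ T_0K&-2T_0\end{bmatrix},\qquad \Sigma_R=\begin{bmatrix}K^\top RK&-K^\top R\\ -RK&R\end{bmatrix}.$$ Then: (i) If there exist a diagonal $T_0\succeq 0$ and a symmetric $R\succeq 0$ with $Q-\Sigma_0-\Sigma_R\succeq 0$, then $Y$ is positive semi-definite. (ii) If there exist a diagonal $T_0\succeq0$ and a symmetric $R\succ 0$ with $Q-\Sigma_0-\Sigma_R\succeq 0$, then $Y$ is positive semi-definite and $Y(x)\ge \lambda_{\min}(R)\,|\mathrm{sat}(Kx)|^2$ for all $x\in\mathbb{R}^n$. (iii) If there exists a symmetric $R\succ0$ with $Q_{11}\succ 0$ and $Q-\Sigma_R\succeq 0$, then $Y$ is positive definite (but not necessarily radially unbounded). (iv) If there exists a diagonal $T_0\succ 0$ with $Q_{11}\succ0$ and $Q-\Sigma_0\succeq 0$, then $Y$ is positive definite and radially unbo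unded.
   Context: The saturation $\mathrm{sat}:\mathbb{R}^m\to\mathbb{R}^m$ is decentralized: $\mathrm{sat}(u)_i=\min\{\overline{u}_i,\max\{-\underline{u}_i,u_i\}\}$ for given limits $\overline{u}_i>0$, $\underline{u}_i>0$ (possibly non-symmetric). The deadzone is $\mathrm{dz}(u)=u-\mathrm{sat}(u)$. $\succ0$/$\succeq0$ denote positive definite/semi-definite; $\lambda_{\min}(R)$ is the smallest eigenvalue of $R$. *)

(* Defs.v *)
From HB Require Import structures.
From mathcomp Require Import all_boot all_order all_algebra.
From mathcomp Require Import classical_sets reals.
Set Implicit Arguments. Unset Strict Implicit. Unset Printing Implicit Defensive.
Import Order.TTheory GRing.Theory Num.Theory.
Local Open Scope ring_scope.
Local Open Scope classical_set_scope.

Section Defs.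
Variable R : realType.

Definition qform k (A : 'M[R]_k) (x : 'cV[R]_k) : R := (x^T *m A *m x) 0 0.

Definition sym_mx k (A : 'M[R]_k) : Prop := A^T = A.
Definition psd_mx k (A : 'M[R]_k) : Prop := forall x : 'cV[R]_k, 0 <= qform A x.
Definition pd_mx k (A : 'M[R]_k) : Prop :=
  forall x : 'cV[R]_k, x != 0 -> 0 < qform A x.

Definition lambda_min k (A : 'M[R]_k) : R := inf [set a : R | eigenvalue A a].

Definition sqnorm k (v : 'cV[R]_k) : R := \sum_i (v i 0) ^+ 2.
Definition enorm k (v : 'cV[R]_k) : R := Num.sqrt (sqnorm v).

Definition sat m (ub lb : 'I_m -> R) (u : 'cV[R]_m) : 'cV[R]_m :=
  \col_i Num.min (ub i) (Num.max (- lb i) (u i 0)).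
Definition dz m (ub lb : 'I_m -> R) (u : 'cV[R]_m) : 'cV[R]_m := u - sat ub lb u.

Definition Yfun n m (ub lb : 'I_m -> R) (K : 'M[R]_(m, n)) (Q : 'M[R]_(n + m))
  (x : 'cV[R]_n) : R := qform Q (col_mx x (dz ub lb (K *m x))).

Definition Sigma0 n m (K : 'M[R]_(m, n)) (T0 : 'M[R]_m) : 'M[R]_(n + m) :=
  block_mx 0 (K^T *m T0) (T0 *m K) (- (T0 *+ 2)).
Definition SigmaR n m (K : 'M[R]_(m, n)) (Rm : 'M[R]_m) : 'M[R]_(n + m) :=
  block_mx (K^T *m Rm *m K) (- (K^T *m Rm)) (- (Rm *m K)) Rm.

Definition psd_fun n (Y : 'cV[R]_n -> R) : Prop := forall x, 0 <= Y x.
Definition pd_fun n (Y : 'cV[R]_n -> R) : Prop :=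
  Y 0 = 0 /\ forall x, x != 0 -> 0 < Y x.
Definition radially_unbounded n (Y : 'cV[R]_n -> R) : Prop :=
  forall M : R, exists r : R, forall x, r <= enorm x -> M <= Y x.
End Defs.

(* Main.v *)
Set Warnings "-notation-overridden,-ambiguous-paths".
Require Import Defs.
From HB Require Import structures.
From mathcomp Require Import all_boot all_order all_algebra.
From mathcomp Require Import classical_sets reals.
From mathcomp Require Import boolp topology normedtype derive.
From mathcomp Require Import ring lra.
Set Implicit Arguments. Unset Strict Implicit. Unset Printing Implicit Defensive.
Import Order.TTheory GRing.Theory Num.Theory.
Import numFieldTopology.Exports numFieldNormedType.Exports.
Local Open Scope ring_scope.
Local Open Scope classical_set_scope.

Lemma satc (R : realType) (a b v : R) : 0 < a -> 0 < b ->
  let s := Num.min a (Num.max (- b) v) in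
  Num.min a b * `|v - s| <= s * (v - s) /\ (s = 0 -> v = 0).
Proof.
move=> a0 b0 s; rewrite /s.
rewrite !(maxEle, minEle).
case: (leP a b) => h3; case: (leP (-b) v) => h1.
- case: (leP a v) => h2.
  + rewrite ger0_norm; last lra. split; [nra|lra].
  + rewrite subrr normr0; split; lra.
- case: (leP a (-b)) => h2; first lra.
  rewrite ler0_norm; last lra. split; [nra|lra].
- case: (leP a v) => h2.
  + rewrite ger0_norm; last lra. split; [nra|lra].
  + rewrite subrr normr0; split; lra.
- case: (leP a (-b)) => h2; first lra.
  rewrite ler0_norm; last lra. split; [nra|lra].
Qed.

Section Alg.
Variable R : realType.
Local Open Scope ring_scope.

Definition bil k (A : 'M[R]_k) (p q : 'cV[R]_k) : R := (p^T *m A *m q) 0 0.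

Lemma qformE k (A : 'M[R]_k) x :
  qform A x = \sum_j (\sum_i x i 0 * A i j) * x j 0.
Proof.
rewrite /qform !mxE; apply: eq_bigr => j _; rewrite !mxE; congr (_ * _).
by apply: eq_bigr => i _; rewrite !mxE.
Qed.

Lemma qformD k (A B : 'M[R]_k) x : qform (A + B) x = qform A x + qform B x.
Proof. by rewrite /qform mulmxDr mulmxDl mxE. Qed.

Lemma qformN k (A : 'M[R]_k) x : qform (- A) x = - qform A x.
Proof. by rewrite /qform mulmxN mulNmx mxE. Qed.

Lemma qformB k (A B : 'M[R]_k) x : qform (A - B) x = qform A x - qform B x.
Proof. by rewrite qformD qformN. Qed.

Lemma qform0 k (x : 'cV[R]_k) : qform 0 x = 0.
Proof. by rewrite /qform mulmx0 mul0mx mxE. Qed.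

Lemma qform_x0 k (A : 'M[R]_k) : qform A 0 = 0.
Proof. by rewrite /qform mulmx0 mxE. Qed.

Lemma bil_mul k l (A : 'M[R]_k) (P Q : 'M[R]_(k, l)) z :
  qform (P^T *m A *m Q) z = bil A (P *m z) (Q *m z).
Proof. by rewrite /qform /bil trmx_mul !mulmxA. Qed.

Lemma qform_mul k l (A : 'M[R]_k) (P : 'M[R]_(k, l)) z :
  qform (P^T *m A *m P) z = qform A (P *m z).
Proof. by rewrite /qform /bil trmx_mul !mulmxA. Qed.

Lemma qform_bil k (A : 'M[R]_k) z : qform A z = bil A z z.
Proof. by []. Qed.

Lemma qform_addZ k (A : 'M[R]_k) p q (t : R) :
  qform A (p + t *: q) = qform A p + t * (bil A p q + bil A q p) + t ^+ 2 * qform A q.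
Proof.
rewrite /qform /bil [(p + _)^T]linearD /= [(t *: q)^T]linearZ /= mulmxDl mulmxDr !mulmxDl.
rewrite -!scalemxAl -?scalemxAr -?scalemxAl !mxE; ring.
Qed.

Lemma bil_sym k (A : 'M[R]_k) p q : sym_mx A -> bil A p q = bil A q p.
Proof.
move=> sA; rewrite /bil.
have -> : (p^T *m A *m q) 0 0 = ((p^T *m A *m q)^T) 0 0 by rewrite [RHS]mxE.
by rewrite !trmx_mul trmxK sA mulmxA.
Qed.


Lemma Sigma0E n m (K : 'M[R]_(m, n)) (T : 'M[R]_m) :
  Sigma0 K T = (row_mx K (- 1%:M))^T *m T *m row_mx 0 1%:M
             + (row_mx 0 1%:M)^T *m T *m row_mx K (- 1%:M).
Proof.
have tN : (- (1%:M : 'M[R]_m))^T = - 1%:M by apply/matrixP => i j; rewrite !mxE eq_sym.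
rewrite /Sigma0 !tr_row_mx tN trmx0 trmx1 !mul_col_mx !mul_mx_row add_col_mx !add_row_mx /block_mx.
rewrite ?mul0mx ?mulmx0 ?mulNmx ?mul1mx ?mulmx1 ?mulmxN.
by rewrite !(addr0, add0r) mulmx1 mulr2n opprD.
Qed.

Lemma SigmaRE n m (K : 'M[R]_(m, n)) (Rm : 'M[R]_m) :
  SigmaR K Rm = (row_mx K (- 1%:M))^T *m Rm *m row_mx K (- 1%:M).
Proof.
have tN : (- (1%:M : 'M[R]_m))^T = - 1%:M by apply/matrixP => i j; rewrite !mxE eq_sym.
rewrite /SigmaR !tr_row_mx tN !mul_col_mx !mul_mx_row /block_mx.
by rewrite ?mulNmx ?mul1mx ?mulmxN ?mulmx1 ?opprK.
Qed.

Lemma rowK_col n m (K : 'M[R]_(m, n)) (x : 'cV[R]_n) (w : 'cV[R]_m) :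
  row_mx K (- 1%:M) *m col_mx x w = K *m x - w.
Proof. by rewrite mul_row_col mulNmx mul1mx. Qed.

Lemma row01_col n m x (w : 'cV[R]_m) :
  row_mx (0 : 'M[R]_(m, n)) 1%:M *m col_mx x w = w.
Proof. by rewrite mul_row_col mul0mx mul1mx add0r. Qed.

Lemma bil_diag k (T : 'M[R]_k) p q : is_diag_mx T ->
  bil T p q = \sum_i T i i * p i 0 * q i 0.
Proof.
move=> /is_diag_mxP dT; rewrite /bil mxE; apply: eq_bigr => j _.
rewrite mxE (bigD1 j) //= big1 ?addr0; first by rewrite mxE; ring.
by move=> i ij; rewrite mxE dT ?mulr0 //; apply: contraNneq ij => /val_inj ->.
Qed.

Lemma qform_delta k (A : 'M[R]_k) i : qform A (delta_mx i 0) = A i i.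
Proof.
by rewrite /qform trmx_delta -colE -rowE !mxE.
Qed.

Lemma sqnormE k (x : 'cV[R]_k) : sqnorm x = qform 1%:M x.
Proof.
rewrite /qform mulmx1 mxE /sqnorm; apply: eq_bigr => i _; by rewrite mxE expr2.
Qed.

Lemma sqnorm_ge0 k (x : 'cV[R]_k) : 0 <= sqnorm x.
Proof. by apply: sumr_ge0 => i _; rewrite sqr_ge0. Qed.

Lemma sqnorm_gt0 k (x : 'cV[R]_k) : x != 0 -> 0 < sqnorm x.
Proof.
move=> x0; have [i xi0] : exists i, x i 0 != 0.
  apply/existsP; apply: contraNT x0 => /existsPn h; apply/eqP/matrixP => i j.
  by rewrite (ord1 j) mxE; apply/eqP; move: (h i); rewrite negbK.
rewrite /sqnorm (bigD1 i) //=.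
have h1 : 0 < x i 0 ^+ 2 by rewrite lt_def sqr_ge0 sqrf_eq0 xi0.
have h2 : 0 <= \sum_(j | j != i) x j 0 ^+ 2 by apply: sumr_ge0 => j _; rewrite sqr_ge0.
lra.
Qed.

Lemma sqnormZ k (t : R) (x : 'cV[R]_k) : sqnorm (t *: x) = t ^+ 2 * sqnorm x.
Proof. rewrite /sqnorm mulr_sumr; apply: eq_bigr => i _; rewrite mxE; ring. Qed.

Lemma sqnorm_col n m (x : 'cV[R]_n) (w : 'cV[R]_m) :
  sqnorm (col_mx x w) = sqnorm x + sqnorm w.
Proof.
rewrite /sqnorm big_split_ord /=; congr (_ + _); apply: eq_bigr => i _.
  by rewrite col_mxEu.
by rewrite col_mxEd.
Qed.

Lemma qform_ul n m (Q : 'M[R]_(n + m)) x :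
  qform Q (col_mx x 0) = qform (ulsubmx Q) x.
Proof.
rewrite -{1}(submxK Q) /qform tr_col_mx trmx0 mul_row_block mul_row_col.
by rewrite !mul0mx !addr0 mulmx0 addr0.
Qed.


Lemma qformZ k (A : 'M[R]_k) (t : R) x : qform A (t *: x) = t ^+ 2 * qform A x.
Proof. by have := qform_addZ A 0 x t; rewrite add0r qform_x0 /bil !linear0 !mul0mx !mxE; lra. Qed.

End Alg.

Lemma cont_sum (R : realType) (T : topologicalType) p (F : 'I_p -> T -> R) :
  (forall i, continuous (F i)) -> continuous (fun x => \sum_i F i x).
Proof.
elim: p F => [|p IH] F Fc.
  have -> : (fun x => \sum_(i < 0) F i x) = (fun=> 0) by apply: funext => x; rewrite big_ord0.
  exact: cst_continuous.
have -> : (fun x => \sum_(i < p.+1) F i x) =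
   (fun x => \sum_(i < p) F (widen_ord (leqnSn p) i) x + F ord_max x).
  by apply: funext => x; rewrite big_ord_recr.
move=> x; apply: (@continuousD _ R^o _ (fun x => \sum_(i < p) F (widen_ord (leqnSn p) i) x) (F ord_max)); last exact: Fc.
by apply: (IH (fun i => F (widen_ord (leqnSn p) i))) => i; exact: Fc.
Qed.


Lemma quad_min (R : realType) k (A : 'M[R]_k.+1) :
  exists v : 'cV[R]_k.+1, sqnorm v = 1 /\
    forall x, qform A v * sqnorm x <= qform A x.
Proof.
pose f (v : 'rV[R]_k.+1) := qform A v^T.
pose g (v : 'rV[R]_k.+1) := sqnorm v^T.
have fc : continuous f.
  have -> : f = fun v => \sum_j (\sum_i v 0 i * A i j) * v 0 j.
    apply: funext => v; rewrite /f qformE; apply: eq_bigr => j _.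
    rewrite mxE; congr (_ * _); apply: eq_bigr => i _; by rewrite mxE.
  apply: cont_sum => j v; apply: continuousM; last exact: coord_continuous.
  have hj : continuous (fun v : 'rV[R]_k.+1 => \sum_i v 0 i * A i j).
    apply: cont_sum => i w.
    apply: continuousM; [exact: coord_continuous|exact: cst_continuous].
  exact: hj.
have gc : continuous g.
  have -> : g = fun v => \sum_i v 0 i * v 0 i.
    apply: funext => v; rewrite /g /sqnorm; apply: eq_bigr => i _.
    by rewrite mxE expr2.
  apply: cont_sum => i v; apply: continuousM; exact: coord_continuous.
pose S := g @^-1` [set 1].
have Scl : closed S.
  by apply: preimage_closed; [move=> x _; exact: gc | exact: closed_eq].
have Scp : compact S.
  apply: (subclosed_compact Scl (rV_compact (fun _ => @segment_compact R (-1) 1))).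
  move=> v; rewrite /S /g /sqnorm /= => Sv i.
  have : (v^T i 0) ^+ 2 <= 1.
    rewrite -Sv (bigD1 i) //= lerDl; apply: sumr_ge0 => j _; exact: sqr_ge0.
  rewrite mxE => h; rewrite /= in_itv /=; change (-1 <= v 0 i <= 1).
  rewrite -ler_norml -(@expr_le1 _ 2) //; by rewrite real_normK ?num_real.
have S0 : S !=set0.
  exists (\row_i (i == ord0)%:R); rewrite /S /g /sqnorm /= (bigD1 ord0) //= big1.
    by rewrite !mxE eqxx expr1n addr0.
  by move=> i /negPf ni; rewrite !mxE ni expr0n.
have [c cS cmin] := compact_EVT_min S0 Scp (continuous_subspaceT fc).
exists c^T; split; first by move: cS; rewrite inE.
move=> x; have [->|x0] := eqVneq x 0.
  by rewrite qform_x0 /sqnorm big1 ?mulr0 // => i _; rewrite mxE expr2 mulr0.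
have sx := sqnorm_gt0 x0.
set r := Num.sqrt (sqnorm x).
have r0 : 0 < r by rewrite sqrtr_gt0.
have r2 : r ^+ 2 = sqnorm x by rewrite sqr_sqrtr // ltW.
have e : r^-1 ^+ 2 * sqnorm x = 1 by rewrite -r2 exprVn mulVf // expf_neq0 // gt_eqF.
have yS : (r^-1 *: x)^T \in S.
  by rewrite inE /S /g /= trmxK sqnormZ.
have := cmin _ yS; rewrite /f trmxK qformZ => h.
have -> : qform A x = r^-1 ^+ 2 * qform A x * sqnorm x by rewrite mulrAC e mul1r.
by rewrite ler_pM2r.
Qed.

Lemma aux_b0 (R : realType) (b c : R) : 0 <= c ->
  (forall t, 0 <= t * b + t ^+ 2 * c) -> b = 0.
Proof.
move=> c0 H; apply/eqP; apply/negP => /negP b0.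
have := H (- b / (c + 1)).
have -> : - b / (c + 1) * b + (- b / (c + 1)) ^+ 2 * c = - (b ^+ 2 / (c + 1) ^+ 2).
  by field; apply/negP => /eqP; lra.
have : 0 < b ^+ 2 / (c + 1) ^+ 2.
  by apply: divr_gt0; rewrite lt_def sqr_ge0 sqrf_eq0 ?b0 //= andbT; apply/negP => /eqP; lra.
lra.
Qed.

Lemma qform_scalar (R : realType) k (mu : R) (x : 'cV[R]_k) :
  qform mu%:M x = mu * sqnorm x.
Proof.
by rewrite sqnormE /qform mul_mx_scalar mulmx1 -scalemxAl mxE.
Qed.

Lemma lmin_bound (R : realType) k (A : 'M[R]_k) : sym_mx A ->
  forall x, lambda_min A * sqnorm x <= qform A x.
Proof.
case: k A => [|k] A sA x.
  by rewrite /sqnorm /qform !big_ord0 mulr0 mxE big_ord0.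
have [v [v1 vmin]] := quad_min A.
set mu := qform A v.
pose B := A - mu%:M.
have Bpsd : forall y, 0 <= qform B y.
  by move=> y; rewrite qformB qform_scalar subr_ge0.
have Bv : qform B v = 0 by rewrite qformB qform_scalar v1 mulr1 subrr.
have sB : sym_mx B by rewrite /sym_mx /B linearB /= tr_scalar_mx sA.
have bil0 : forall y, bil B v y = 0.
  move=> y; have h : bil B v y + bil B y v = 0.
    apply: (@aux_b0 _ _ (qform B y)) => // t.
    by have := Bpsd (v + t *: y); rewrite qform_addZ Bv add0r.
  by move: h; rewrite (bil_sym _ _ sB) => h; lra.
have vB : v^T *m B = 0.
  apply/matrixP => i j; rewrite (ord1 i) [RHS]mxE.
  have := bil0 (delta_mx j 0); rewrite /bil -colE => h.
  by rewrite -h [RHS]mxE.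
have eig : eigenvalue A mu.
  apply/eigenvalueP; exists v^T.
    by move/eqP: vB; rewrite /B mulmxBr subr_eq0 mul_mx_scalar => /eqP.
  apply/negP => /eqP/(congr1 trmx); rewrite trmxK linear0 => v0.
  by move: v1; rewrite v0 /sqnorm big1 => [|i _]; [lra|rewrite mxE expr2 mulr0].
have lb : forall a, eigenvalue A a -> mu <= a.
  move=> a /eigenvalueP [w wA w0].
  have w0' : w^T != 0 by apply: contra w0 => /eqP/(congr1 trmx); rewrite trmxK linear0 => ->.
  have := vmin w^T; have := sqnorm_gt0 w0'.
  have -> : qform A w^T = a * sqnorm w^T.
    by rewrite sqnormE /qform trmxK wA mulmx1 -scalemxAl mxE.
  move=> s0; rewrite ler_pM2r //.
have : lambda_min A <= mu.
  rewrite /lambda_min; apply: ge_inf => //; exists mu => a; exact: lb.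
move=> lm; apply: le_trans (vmin x); apply: ler_wpM2r => //; exact: sqnorm_ge0.
Qed.

Section Main.
Variable R : realType.
Local Open Scope ring_scope.

Lemma sat_coord m (ub lb : 'I_m -> R) (u : 'cV[R]_m) i :
  0 < ub i -> 0 < lb i ->
  Num.min (ub i) (lb i) * `|dz ub lb u i 0| <= sat ub lb u i 0 * dz ub lb u i 0
  /\ (sat ub lb u i 0 = 0 -> u i 0 = 0)
  /\ dz ub lb u i 0 = u i 0 - sat ub lb u i 0.
Proof.
move=> hu hl; have [h1 h2] := satc (u i 0) hu hl.
by rewrite /dz !mxE; split; [|split].
Qed.

Lemma dz0 m (ub lb : 'I_m -> R) : (forall i, 0 < ub i) -> (forall i, 0 < lb i) ->
  dz ub lb 0 = 0.
Proof.
move=> hu hl; apply/matrixP => i j; rewrite (ord1 j) /dz /sat !mxE.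
rewrite (maxEle, minEle) !(maxEle, minEle).
have := hu i; have := hl i => a b.
case: (leP (- lb i) 0) => h; last lra.
by case: (leP (ub i) 0) => h'; lra.
Qed.

Lemma qform_Sigma0 n m (K : 'M[R]_(m, n)) (T : 'M[R]_m) x w :
  qform (Sigma0 K T) (col_mx x w) = bil T (K *m x - w) w + bil T w (K *m x - w).
Proof. by rewrite Sigma0E qformD !bil_mul rowK_col row01_col. Qed.

Lemma qform_SigmaR n m (K : 'M[R]_(m, n)) (Rm : 'M[R]_m) x w :
  qform (SigmaR K Rm) (col_mx x w) = qform Rm (K *m x - w).
Proof. by rewrite SigmaRE qform_mul rowK_col. Qed.

Lemma Kx_dz m (ub lb : 'I_m -> R) (u : 'cV[R]_m) : u - dz ub lb u = sat ub lb u.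
Proof. by rewrite /dz opprB addrC subrK. Qed.

Lemma pd_psd k (A : 'M[R]_k) : pd_mx A -> psd_mx A.
Proof.
move=> pA x; have [->|x0] := eqVneq x 0; first by rewrite qform_x0.
exact/ltW/pA.
Qed.

Lemma diag_ge0 k (T : 'M[R]_k) i : psd_mx T -> 0 <= T i i.
Proof. by move=> pT; have := pT (delta_mx i 0); rewrite qform_delta. Qed.

Lemma diag_gt0 k (T : 'M[R]_k) i : pd_mx T -> 0 < T i i.
Proof.
move=> pT; have := pT (delta_mx i 0); rewrite qform_delta; apply.
apply/negP => /eqP/matrixP/(_ i 0); rewrite !mxE !eqxx /=; lra.
Qed.

End Main.

Section Parts.
Variable R : realType.
Local Open Scope ring_scope.
Variables (n m : nat) (ub lb : 'I_m -> R) (K : 'M[R]_(m, n)) (Q : 'M[R]_(n + m)).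
Hypothesis hub : forall i, 0 < ub i.
Hypothesis hlb : forall i, 0 < lb i.

Let s x := sat ub lb (K *m x).
Let w x := dz ub lb (K *m x).

Lemma S0form T x : is_diag_mx T ->
  qform (Sigma0 K T) (col_mx x (w x)) = 2 * \sum_i T i i * (s x i 0 * w x i 0).
Proof.
move=> dT; rewrite qform_Sigma0 /w Kx_dz !bil_diag // -/(s x) mulr2n mulrDl !mul1r.
by congr (_ + _); apply: eq_bigr => i _; rewrite ?mulrA // mulrAC.
Qed.

Lemma S0_ge0 T x : is_diag_mx T -> psd_mx T -> 0 <= qform (Sigma0 K T) (col_mx x (w x)).
Proof.
move=> dT pT; rewrite S0form // mulr_ge0 // sumr_ge0 // => i _.
apply: mulr_ge0; first exact: diag_ge0.
have [h _] := sat_coord (K *m x) (hub i) (hlb i).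
apply: le_trans h; apply: mulr_ge0 => //.
by rewrite le_min !ltW.
Qed.

Lemma SR_form Rm x : qform (SigmaR K Rm) (col_mx x (w x)) = qform Rm (s x).
Proof. by rewrite qform_SigmaR /w Kx_dz. Qed.

Lemma Y0 : Yfun ub lb K Q 0 = 0.
Proof. by rewrite /Yfun mulmx0 dz0 // col_mx0 qform_x0. Qed.

Lemma w0_of_s0 x : s x = 0 -> w x = 0.
Proof.
move=> h; apply/matrixP => i j; rewrite (ord1 j).
have [_ [h2 h3]] := sat_coord (K *m x) (hub i) (hlb i).
rewrite /w h3 h2; first by rewrite -/(s x) h !mxE subrr.
by rewrite -/(s x) h mxE.
Qed.


Lemma part_i T0 Rm : is_diag_mx T0 -> psd_mx T0 -> psd_mx Rm ->
  psd_mx (Q - Sigma0 K T0 - SigmaR K Rm) ->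
  forall x, qform Rm (s x) <= Yfun ub lb K Q x.
Proof.
move=> dT pT pR pP x; rewrite /Yfun -/(w x).
have := pP (col_mx x (w x)); rewrite !qformB SR_form.
have := S0_ge0 x dT pT; lra.
Qed.

Lemma part_iii Rm : pd_mx Rm -> pd_mx (ulsubmx Q) -> psd_mx (Q - SigmaR K Rm) ->
  pd_fun (Yfun ub lb K Q).
Proof.
move=> pR pQ pP; split; first exact: Y0.
move=> x x0; rewrite /Yfun -/(w x).
have := pP (col_mx x (w x)); rewrite !qformB SR_form => h.
have [s0|s0] := eqVneq (s x) 0.
  by rewrite (w0_of_s0 s0) qform_ul; apply: pQ.
have := pR _ s0; lra.
Qed.

Lemma part_iv_pd T0 : is_diag_mx T0 -> pd_mx T0 -> pd_mx (ulsubmx Q) ->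
  psd_mx (Q - Sigma0 K T0) -> pd_fun (Yfun ub lb K Q).
Proof.
move=> dT pT pQ pP; split; first exact: Y0.
move=> x x0; rewrite /Yfun -/(w x).
have := pP (col_mx x (w x)); rewrite !qformB => h.
have [w0|w0] := eqVneq (w x) 0.
  by rewrite w0 qform_ul; apply: pQ.
have [i wi] : exists i, w x i 0 != 0.
  apply/existsP; apply: contraNT w0 => /existsPn hh; apply/eqP/matrixP => i j.
  by rewrite (ord1 j) [RHS]mxE; apply/eqP; move: (hh i); rewrite negbK.
suff : 0 < qform (Sigma0 K T0) (col_mx x (w x)) by lra.
rewrite S0form // mulr_gt0 // (bigD1 i) //=.
have hi : 0 < T0 i i * (s x i 0 * w x i 0).
  apply: mulr_gt0; first exact: diag_gt0.
  have [h1 _] := sat_coord (K *m x) (hub i) (hlb i).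
  apply: lt_le_trans h1; apply: mulr_gt0; first by rewrite lt_min !hub !hlb.
  by rewrite normr_gt0.
have hr : 0 <= \sum_(j | j != i) T0 j j * (s x j 0 * w x j 0).
  apply: sumr_ge0 => j _; apply: mulr_ge0; first exact/diag_ge0/pd_psd.
  have [h1 _] := sat_coord (K *m x) (hub j) (hlb j).
  apply: le_trans h1; apply: mulr_ge0 => //; by rewrite le_min !ltW.
lra.
Qed.

End Parts.

Section Radial.
Variable R : realType.
Local Open Scope ring_scope.

Lemma part_iv_ru n m (ub lb : 'I_m -> R) (K : 'M[R]_(m, n)) (Q : 'M[R]_(n + m))
  (hub : forall i, 0 < ub i) (hlb : forall i, 0 < lb i) T0 : is_diag_mx T0 -> pd_mx T0 -> pd_mx (ulsubmx Q) ->
  psd_mx (Q - Sigma0 K T0) -> radially_unbounded (Yfun ub lb K Q).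
Proof.
move=> dT pT pQ pP.
case: n K Q pQ pP => [|n'] K' Q' pQ pP M.
  exists 1 => x; rewrite /enorm /sqnorm big_ord0 sqrtr0; lra.
pose P := Q' - Sigma0 K' T0.
have [v [v1 vmin]] := quad_min (ulsubmx Q').
set lam := qform (ulsubmx Q') v.
have lam0 : 0 < lam.
  apply: pQ; apply/negP => /eqP v0; move: v1; rewrite v0 /sqnorm big1 => [|i _]; [lra|].
  by rewrite mxE expr2 mulr0.
have [v' [_ v'min]] := quad_min (k := n' + m) (- P : 'M[R]_(n'.+1 + m)).
have v'min' : forall x : 'cV[R]_(n'.+1 + m), qform (- P) v' * sqnorm x <= qform (- P) x := v'min.
clear v'min.
set mu := qform (- P) v'.
pose C := `|mu|.
have C0 : 0 <= C by exact: normr_ge0.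
have cbound : forall y : 'cV[R]_m, qform P (col_mx 0 y) <= C * sqnorm y.
  move=> y; have := v'min' (col_mx 0 y); rewrite -/mu qformN sqnorm_col.
  have -> : sqnorm (0 : 'cV[R]_n'.+1) = 0 by rewrite /sqnorm big1 // => i _; rewrite mxE expr2 mulr0.
  rewrite add0r => h; have := sqnorm_ge0 y; have : - C <= mu by rewrite /C lerNl ler_normr lexx orbT.
  nra.
pose eps i := T0 i i * Num.min (ub i) (lb i).
have eps0 : forall i, 0 < eps i.
  by move=> i; apply: mulr_gt0; [exact: diag_gt0 | rewrite lt_min hub hlb].
pose E := \sum_i (eps i)^-2.
have E0 : 0 <= E by apply: sumr_ge0 => i _; rewrite invr_ge0 exprn_ge0 // ltW.
pose N := `|M|.
have N0 : 0 <= N by exact: normr_ge0.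
have NM : M <= N by exact: ler_norm.
pose B0 := 4 * (N + C * N ^+ 2 * E) / lam.
have B00 : 0 <= B0.
  rewrite /B0 divr_ge0 ?(ltW lam0) // mulr_ge0 // addr_ge0 // mulr_ge0 // mulr_ge0 //.
  exact: exprn_ge0.
exists (Num.sqrt B0) => x hx.
have hx2 : B0 <= sqnorm x by rewrite -ler_sqrt // sqnorm_ge0.
have ax : lam * sqnorm x <= qform (ulsubmx Q') x by apply: vmin.
have laB : lam * B0 = 4 * (N + C * N ^+ 2 * E).
  by rewrite /B0 mulrC divfK // gt_eqF.
have laX : 4 * (N + C * N ^+ 2 * E) <= lam * sqnorm x by rewrite -laB ler_pM2l.
rewrite /Yfun; set wx := dz ub lb (K' *m x).
set L := qform (Sigma0 K' T0) (col_mx x wx).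
have L0 : 0 <= L.
  rewrite /L /wx; apply: S0_ge0 => //; exact: pd_psd.
have -> : qform Q' (col_mx x wx) = qform P (col_mx x wx) + L by rewrite /P qformB subrK.
have zsplit : forall t : R, col_mx x (t *: wx) = col_mx x 0 + t *: col_mx 0 wx.
  by move=> t; rewrite scale_col_mx scaler0 add_col_mx addr0 add0r.
have a0E : qform P (col_mx x 0) = qform (ulsubmx Q') x.
  rewrite /P qformB qform_ul qform_Sigma0 /bil ?trmx0 ?mulmx0 ?mul0mx ?mxE; lra.
have hz1 := zsplit 1; rewrite scale1r in hz1.
have e1 := qform_addZ P (col_mx x 0) (col_mx 0 wx) 1.
have e2 := qform_addZ P (col_mx x 0) (col_mx 0 wx) 2.
rewrite -zsplit scale1r in e1; rewrite -zsplit in e2.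
have p2 := pP (col_mx x (2 *: wx)); rewrite -/P e2 in p2.
have p1 := pP (col_mx x wx); rewrite -/P in p1.
have cb := cbound wx.
rewrite e1; rewrite e1 in p1.
rewrite a0E in p1 p2 *.
set bb := bil P (col_mx x 0) (col_mx 0 wx) + bil P (col_mx 0 wx) (col_mx x 0) in p1 p2 *.
set a0 := qform (ulsubmx Q') x in ax p1 p2 *.
set c0 := qform P (col_mx 0 wx) in cb p1 p2 *.
set sw := sqnorm wx in cb.
have sw0 : 0 <= sw by exact: sqnorm_ge0.
have CN : 0 <= C * N ^+ 2 * E by rewrite mulr_ge0 // mulr_ge0 // exprn_ge0.
have [hC|hC] := leP (C * sw) (lam * sqnorm x / 4).
  apply: (le_trans NM); nra.
suff : N <= L by lra.
rewrite leNgt; apply/negP => LN.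
have : sw <= N ^+ 2 * E.
  rewrite /sw /sqnorm /E mulr_sumr; apply: ler_sum => i _.
  have [h1 _] := sat_coord (K' *m x) (hub i) (hlb i).
  have tle : T0 i i * (sat ub lb (K' *m x) i 0 * wx i 0) <= L / 2.
    rewrite /L S0form // [2 * _]mulrC mulfK ?pnatr_eq0 //.
    rewrite (bigD1 i) //= lerDl; apply: sumr_ge0 => j _; apply: mulr_ge0; first exact/diag_ge0/pd_psd.
    have [h1' _] := sat_coord (K' *m x) (hub j) (hlb j).
    apply: le_trans h1'; apply: mulr_ge0 => //; by rewrite le_min !ltW.
  have ei : eps i * `|wx i 0| <= N.
    have Ti := diag_gt0 i pT.
    rewrite /eps -mulrA; apply: le_trans (ler_wpM2l (ltW Ti) h1) _; lra.
  have yt : `|wx i 0| <= N / eps i by rewrite ler_pdivlMr // mulrC.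
  have ny := normr_ge0 (wx i 0).
  rewrite -real_normK ?num_real // -exprVn -exprMn.
  set y := `|wx i 0| in yt ny *; set t := N / eps i in yt *; nra.
move=> hsw.
have : C * sw <= C * (N ^+ 2 * E) by apply: ler_wpM2l.
lra.
Qed.
End Radial.

Lemma counter (R : realType) :
  exists (n' m' : nat) (ub' lb' : 'I_m' -> R) (K' : 'M[R]_(m', n'))
          (Q' : 'M[R]_(n' + m')) (Rm' : 'M[R]_m'),
      (forall i, 0 < ub' i) /\ (forall i, 0 < lb' i) /\ sym_mx Q' /\
      sym_mx Rm' /\ pd_mx Rm' /\ pd_mx (ulsubmx Q') /\
      psd_mx (Q' - SigmaR K' Rm') /\
      ~ radially_unbounded (Yfun ub' lb' K' Q').
Proof.
pose one := fun _ : 'I_1 => (1 : R).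
pose K1 := (1%:M : 'M[R]_1).
have pd1 : pd_mx (1%:M : 'M[R]_1) by move=> x x0; rewrite -sqnormE; exact: sqnorm_gt0.
exists 1%N, 1%N, one, one, K1, (SigmaR K1 1%:M), 1%:M.
split; first by move=> i; exact: ltr01.
split; first by move=> i; exact: ltr01.
split; first by rewrite /sym_mx SigmaRE !trmx_mul trmxK trmx1 mulmxA.
split; first by rewrite /sym_mx trmx1.
split; first exact: pd1.
split; first by rewrite /SigmaR block_mxKul /K1 trmx1 !mulmx1.
split; first by move=> x; rewrite subrr qform0.
move=> /(_ 2) [r H].
pose x := (const_mx `|r| : 'cV[R]_1).
have := H x.
have -> : enorm x = `|r|.
  by rewrite /enorm /sqnorm big_ord1 mxE sqrtr_sqr normr_id.
move=> /(_ (ler_norm r)).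
rewrite /Yfun qform_SigmaR Kx_dz -sqnormE /sqnorm big_ord1 /sat mxE.
set v := Num.max _ _.
have h1 : Num.min (one 0) v <= 1 by rewrite ge_min lexx.
have h2 : -1 <= Num.min (one 0) v.
  rewrite le_min /one /v le_max lexx /=; apply/andP; split => //; lra.
set u := Num.min _ _ in h1 h2 *; nra.
Qed.

Local Close Scope classical_set_scope.

Theorem theorem1 (R : realType) (n m : nat) (ub lb : 'I_m -> R)
  (K : 'M[R]_(m, n)) (Q : 'M[R]_(n + m)) :
  (forall i, 0 < ub i) -> (forall i, 0 < lb i) ->
  sym_mx Q ->
  let Y := Yfun ub lb K Q in
  (* (i) *)
  ((exists (T0 Rm : 'M[R]_m),
      is_diag_mx T0 /\ psd_mx T0 /\ sym_mx Rm /\ psd_mx Rm /\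
      psd_mx (Q - Sigma0 K T0 - SigmaR K Rm)) ->
    psd_fun Y) /\
  (* (ii) *)
  (forall (T0 Rm : 'M[R]_m),
      is_diag_mx T0 -> psd_mx T0 -> sym_mx Rm -> pd_mx Rm ->
      psd_mx (Q - Sigma0 K T0 - SigmaR K Rm) ->
    psd_fun Y /\
    forall x, lambda_min Rm * sqnorm (sat ub lb (K *m x)) <= Y x) /\
  (* (iii) *)
  ((exists Rm : 'M[R]_m,
      sym_mx Rm /\ pd_mx Rm /\ pd_mx (ulsubmx Q) /\ psd_mx (Q - SigmaR K Rm)) ->
    pd_fun Y) /\
  (* (iv) *)
  ((exists T0 : 'M[R]_m,
      is_diag_mx T0 /\ pd_mx T0 /\ pd_mx (ulsubmx Q) /\ psd_mx (Q - Sigma0 K T0)) ->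
    pd_fun Y /\ radially_unbounded Y) /\
  (* (iii), "not necessarily radially unbounded": some instance satisfying the
     hypotheses of (iii) has a Y that is not radially unbounded *)
  (exists (n' m' : nat) (ub' lb' : 'I_m' -> R) (K' : 'M[R]_(m', n'))
          (Q' : 'M[R]_(n' + m')) (Rm' : 'M[R]_m'),
      (forall i, 0 < ub' i) /\ (forall i, 0 < lb' i) /\ sym_mx Q' /\
      sym_mx Rm' /\ pd_mx Rm' /\ pd_mx (ulsubmx Q') /\
      psd_mx (Q' - SigmaR K' Rm') /\
      ~ radially_unbounded (Yfun ub' lb' K' Q')).
Proof.
move=> hub hlb sQ Y; rewrite /Y.
split.
  move=> [T0 [Rm [dT [pT [sR [pR pP]]]]]] x.
  exact: le_trans (pR _) (part_i hub hlb dT pT pR pP x).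
split.
  move=> T0 Rm dT pT sR pR pP; have pR' := pd_psd pR.
  split; first by move=> x; exact: le_trans (pR' _) (part_i hub hlb dT pT pR' pP x).
  move=> x; exact: le_trans (lmin_bound sR _) (part_i hub hlb dT pT pR' pP x).
split.
  move=> [Rm [sR [pR [pQ pP]]]]; eapply part_iii; eassumption.
split.
  move=> [T0 [dT [pT [pQ pP]]]]; split; first by eapply part_iv_pd; eassumption.
  by eapply part_iv_ru; eassumption.
exact: counter.
Qed.
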